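(* For $i\ge0$ and $j\ge0$, the map $\phi_i$ restricts to a linear isomorphism of $M_i(j)$ onto the $A_*$-subcomodule $N_{i-1}(j)\subset(A/\!/A(i-1))_*$.
   Context: $A_*$ is the mod $2$ dual Steenrod algebra with conjugate generators $\bar\xi_k$. For $i\ge-1$, $A(i)_*=\mathbb{F}_2[\bar\xi_1,\dots,\bar\xi_{i+1}]/(\bar\xi_1^{2^{i+1}},\dots,\bar\xi_{i+1}^2)$ and $(A/\!/A(i))_*=A_*\square_{A(i)_*}\mathbb{F}_2=\mathbb{F}_2[\bar\xi_1^{2^{i+1}},\bar\xi_2^{2^i},\dots,\bar\xi_{i+1}^2,\bar\xi_{i+2},\dots]$. Give $A_*$ the multiplicative ''Brown–Gitler weight'' in which $\bar\xi_k$ has weight $2^{k-1}$; every monomial of $(A/\!/A(i))_*$ has weight divisible by $2^{i+1}$. $N_i(j)\subset(A/\!/A(i))_*$ is the span of monomials of weight $\le2^{i+1}j$ (an $A_*$-subcomodule), and $M_i(j)\subset(A/\!/A(i))_*$ is the span of monomials of weight exactly $2^{i+1}j$. $\phi_i:(A/\!/A(i))_*\to(A/\!/A(i-1))_*$ is the ring map with $\phi_i(\bar\xi_k^{2^l})=\bar\xi_{k-1}^{2^l}$ for $k>1$ and $\phi_i(\bar\xi_1^{2^{i+1}})=1$. *)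

(* Defs.v *)
From mathcomp Require Import all_boot.
Set Implicit Arguments. Unset Strict Implicit. Unset Printing Implicit Defensive.

(* A monomial of A_* = F_2[xi_1, xi_2, ...] (conjugate generators) is encoded by
   its exponent sequence: [nth 0 e t] is the exponent of xi_{t+1}. *)
Definition mono := seq nat.

Definition meq (e f : mono) : bool :=
  all (fun t => nth 0 e t == nth 0 f t) (iota 0 (maxn (size e) (size f))).

(* An element of A_* (an F_2-linear combination of monomials) is encoded by a
   finite formal sum (list) of monomials; its coefficient at m is the parity of
   the number of occurrences of m. *)
Definition poly := seq mono.
Definition coef (p : poly) (m : mono) : bool := odd (count (meq m) p).
Definition peq (p q : poly) : Prop := forall m, coef p m = coef q m.

Definition in_span (S : mono -> bool) (p : poly) : Prop :=
  forall m, coef p m -> S m.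

(* Brown--Gitler weight: xi_k has weight 2^(k-1), multiplicative. *)
Definition weight (e : mono) : nat := \sum_(t < size e) nth 0 e t * 2 ^ t.

(* Parameter convention: [s] stands for i+1, so s ranges over nat <-> i >= -1.
   A monomial lies in (A//A(i))_* = F_2[xi_1^(2^(i+1)), xi_2^(2^i), ...,
   xi_(i+1)^2, xi_(i+2), ...] iff 2^(i+2-k) divides the exponent of xi_k for
   k <= i+1, i.e. 2^(s-t) | e_t for t < s (0-indexed). *)
Definition in_AmodA (s : nat) (e : mono) : bool :=
  all (fun t => 2 ^ (s - t) %| nth 0 e t) (iota 0 s).

Definition N_mono (s j : nat) (e : mono) : bool :=
  in_AmodA s e && (weight e <= 2 ^ s * j).
Definition M_mono (s j : nat) (e : mono) : bool :=
  in_AmodA s e && (weight e == 2 ^ s * j).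

Definition inN (s j : nat) (p : poly) : Prop := in_span (N_mono s j) p.
Definition inM (s j : nat) (p : poly) : Prop := in_span (M_mono s j) p.

(* phi_i : (A//A(i))_* -> (A//A(i-1))_*, the ring map with
   xi_k^(2^l) |-> xi_(k-1)^(2^l) (k > 1) and xi_1^(2^(i+1)) |-> 1.
   On a monomial of (A//A(i))_* it drops the xi_1 exponent and shifts the
   others down by one index; extended linearly. *)
Definition phi_mono (e : mono) : mono := behead e.
Definition phi (p : poly) : poly := map phi_mono p.

(* Main.v *)
Require Import Defs.
From mathcomp Require Import all_boot.
Set Implicit Arguments. Unset Strict Implicit. Unset Printing Implicit Defensive.

Fixpoint trim (e : mono) : mono :=
  if e is x :: e' then
    (if (x == 0) && (trim e' == [::]) then [::] else x :: trim e')
  else [::].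

Lemma nth_trim e t : nth 0 (trim e) t = nth 0 e t.
Proof.
elim: e t => [|x e IH] t /=; first by [].
case: ifP => [/andP[/eqP-> /eqP He]| _]; case: t => [|t] //=.
by rewrite -IH He ?nth_nil.
Qed.

Lemma trim_nil f : (forall t, nth 0 f t = 0) -> trim f = [::].
Proof.
elim: f => [|y f IH] H //=.
have -> : y = 0 by apply: (H 0).
by rewrite IH // => t; apply: (H t.+1).
Qed.

Lemma trim_nth e f : (forall t, nth 0 e t = nth 0 f t) -> trim e = trim f.
Proof.
elim: e f => [|x e IH] [|y f] H.
- by [].
- by symmetry; apply: trim_nil => t; rewrite -H nth_nil.
- by apply: trim_nil => t; rewrite H nth_nil.
- have Hxy : x = y := H 0.
  have E := IH f (fun t => H t.+1).
  by rewrite /= E Hxy.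
Qed.

Lemma meq_trim e f : meq e f = (trim e == trim f).
Proof.
apply/idP/eqP.
- move/allP => H; apply: trim_nth => t.
  case: (ltnP t (maxn (size e) (size f))) => Ht.
    by apply/eqP/H; rewrite mem_iota add0n Ht.
  move: Ht; rewrite geq_max => /andP[h1 h2].
  by rewrite !nth_default.
- move=> E; apply/allP => t _.
  by rewrite -(nth_trim e) -(nth_trim f) E.
Qed.

Lemma weight_nil : weight [::] = 0.
Proof. by rewrite /weight big_ord0. Qed.

Lemma weight_cons x e : weight (x :: e) = x + 2 * weight e.
Proof.
rewrite /weight /= big_ord_recl /= expn0 muln1; congr (_ + _).
rewrite big_distrr /=; apply: eq_bigr => t _.
by rewrite /= expnS mulnCA.
Qed.

Lemma weight_trim e : weight (trim e) = weight e.
Proof.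
elim: e => [|x e IH] //=.
case: ifP => [/andP[/eqP-> /eqP He]|_].
  by rewrite weight_cons -IH He weight_nil.
by rewrite !weight_cons IH.
Qed.

Lemma weight_ext e f : trim e = trim f -> weight e = weight f.
Proof. by move=> E; rewrite -weight_trim E weight_trim. Qed.

Lemma weight_behead e : weight e = head 0 e + 2 * weight (behead e).
Proof. by case: e => [|x e]; [rewrite weight_nil | rewrite weight_cons]. Qed.

Lemma inA_ext s e f : trim e = trim f -> in_AmodA s e = in_AmodA s f.
Proof.
move=> E; rewrite /in_AmodA; apply: eq_all => t /=.
by rewrite -(nth_trim e) E nth_trim.
Qed.

Lemma trim_behead e : trim (behead e) = behead (trim e).
Proof. by case: e => [|x e] //=; case: ifP => [/andP[_ /eqP ->]|_]. Qed.

Lemma coefE p m : coef p m = odd (count_mem (trim m) (map trim p)).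
Proof.
rewrite /coef count_map; congr odd; apply: eq_count => e.
by rewrite /= meq_trim eq_sym.
Qed.

Lemma count_split (T : eqType) (P : pred T) x t :
  count P t = count (predI P (pred1 x)) t + count (predI P (predC1 x)) t.
Proof.
elim: t => //= y t ->.
by case: (P y); case: (y == x) => /=; rewrite ?add0n ?add1n ?addnS ?addSn.
Qed.

Lemma witness (T : eqType) (P : pred T) s :
  odd (count P s) -> exists x, [/\ x \in s, P x & odd (count_mem x s)].
Proof.
move: {2}(size s) (leqnn (size s)) => n.
elim: n s => [|n IH] [|x s] Hs Hodd //.
move: Hs => /= Hs.
case Px: (P x && odd (count_mem x (x :: s))).
  by case/andP: Px => Px Ho; exists x; rewrite mem_head.
move: Hodd; rewrite -/(count P (x :: s)) (count_split P x) oddD.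
have -> : odd (count (predI P (pred1 x)) (x :: s)) = false.
  case Pxb: (P x).
    have -> : count (predI P (pred1 x)) (x :: s) = count (pred1 x) (x :: s).
      by apply: eq_count => z /=; case: eqP => [->|]; rewrite ?Pxb ?andbF.
    by move: Px; rewrite Pxb.
  have -> : count (predI P (pred1 x)) (x :: s) = count pred0 (x :: s).
    by apply: eq_count => z /=; case: eqP => [->|]; rewrite ?Pxb ?andbF.
  by rewrite count_pred0.
rewrite -count_filter /= eqxx /= => Ho.
have [|y [yin Py Hy]] := IH _ _ Ho.
  by rewrite size_filter (leq_trans (count_size _ _)).
move: yin; rewrite mem_filter => /andP[yx yin].
exists y; split => //; first by rewrite inE yin orbT.
have yx' : (x == y) = false by apply/eqP => E; move: yx; rewrite /= E eqxx.
rewrite yx' add0n.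
move: Hy; rewrite count_filter; congr odd; apply: eq_count => z /=.
by case: eqP => // ->; rewrite eq_sym yx'.
Qed.

Lemma inA_trim s e : in_AmodA s (trim e) = in_AmodA s e.
Proof. by rewrite /in_AmodA; apply: eq_all => t /=; rewrite nth_trim. Qed.

Lemma N_trim s j e : N_mono s j (trim e) = N_mono s j e.
Proof. by rewrite /N_mono inA_trim weight_trim. Qed.

Lemma M_trim s j e : M_mono s j (trim e) = M_mono s j e.
Proof. by rewrite /M_mono inA_trim weight_trim. Qed.

Lemma M_N i j e : M_mono i.+1 j e -> N_mono i j (behead e).
Proof.
move/andP=> [/allP HA /eqP Hw]; rewrite /N_mono; apply/andP; split.
  apply/allP => t; rewrite mem_iota add0n => /andP[_ ht].
  rewrite nth_behead.
  have := HA t.+1; rewrite mem_iota add0n ltnS ht subSS; exact.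
move: Hw; rewrite weight_behead expnS -mulnA => Hw.
by rewrite -(leq_pmul2l (isT : 0 < 2)) -Hw leq_addl.
Qed.

Lemma dvd_weight s f : in_AmodA s f -> 2 ^ s %| weight f.
Proof.
move/allP => HA; rewrite /weight; apply: dvdn_sum => t _.
case: (ltnP t s) => ht.
  have := HA t; rewrite mem_iota add0n ht => /(_ isT) H.
  by rewrite -(subnK (ltnW ht)) expnD dvdn_mul.
by apply: dvdn_mull; rewrite dvdn_exp2l.
Qed.

Definition liftm (i j : nat) (f : mono) : mono := (2 ^ i.+1 * j - 2 * weight f) :: f.

Lemma lift_M i j f : N_mono i j f -> M_mono i.+1 j (liftm i j f).
Proof.
move/andP=> [HA0 Hw]; have /allP HA := HA0.
have H2 : 2 * weight f <= 2 ^ i.+1 * j by rewrite expnS -mulnA leq_mul2l Hw orbT.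
apply/andP; split.
  apply/allP => t; rewrite mem_iota add0n => /andP[_ ht].
  case: t ht => [|t] ht /=.
    rewrite subn0; apply: dvdn_sub; first exact: dvdn_mulr.
    by rewrite expnS dvdn_mul // dvd_weight.
  by rewrite subSS; apply: HA; rewrite mem_iota add0n -ltnS.
by rewrite weight_cons subnK.
Qed.

Lemma M_inj s j e f : M_mono s j e -> M_mono s j f ->
  trim (behead e) = trim (behead f) -> trim e = trim f.
Proof.
move=> /andP[_ /eqP He] /andP[_ /eqP Hf] E; apply: trim_nth => [[|t]].
  rewrite !nth0; apply/eqP; rewrite -(eqn_add2r (2 * weight (behead e))).
  by rewrite -weight_behead (weight_ext E) -weight_behead He Hf.
by rewrite -!nth_behead -(nth_trim (behead e)) E nth_trim.
Qed.

Lemma phiQ p : map trim (phi p) = map behead (map trim p).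
Proof. by rewrite /phi -!map_comp; apply: eq_map => e /=; rewrite trim_behead. Qed.

Lemma coef_phi i j p m : inM i.+1 j p -> M_mono i.+1 j m ->
  coef (phi p) (behead m) = coef p m.
Proof.
move=> Hp Mm; rewrite !coefE phiQ count_map trim_behead.
set Q := map trim p.
rewrite (count_split (preim behead (pred1 (behead (trim m)))) (trim m)) oddD.
have -> : count (predI (preim behead (pred1 (behead (trim m)))) (pred1 (trim m))) Q
        = count_mem (trim m) Q.
  by apply: eq_count => z /=; case E: (z == trim m); rewrite ?andbF // (eqP E) eqxx.
case Ho: (odd (count (predI _ (predC1 (trim m))) Q)); last by rewrite addbF.
have [x [xin /andP[/= /eqP Hb Hx] Hox]] := witness Ho.
case/mapP: xin => e ein xe.
have Me : M_mono i.+1 j e.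
  by apply: Hp; rewrite coefE -/Q -xe.
have := M_inj Me Mm; rewrite !trim_behead -xe Hb => /(_ erefl) E.
by move: Hx; rewrite E eqxx.
Qed.

Theorem lemma5p2 (i j : nat) :
  [/\ forall p : poly, inM i.+1 j p -> inN i j (phi p),
      forall p q : poly, inM i.+1 j p -> inM i.+1 j q ->
        peq (phi p) (phi q) -> peq p q
    & forall q : poly, inN i j q -> exists p : poly, inM i.+1 j p /\ peq (phi p) q].
Proof.
split.
- move=> p Hp m; rewrite coefE phiQ count_map => Ho.
  have [x [xin /= /eqP Hb Hox]] := witness Ho.
  case/mapP: xin => e ein xe.
  have Me : M_mono i.+1 j e by apply: Hp; rewrite coefE -xe.
  by rewrite -N_trim -Hb xe -trim_behead N_trim M_N.
- move=> p q Hp Hq Hpq m.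
  case Mm: (M_mono i.+1 j m).
    by rewrite -(coef_phi Hp Mm) -(coef_phi Hq Mm) Hpq.
  have Hp' := Hp m; have Hq' := Hq m; rewrite Mm in Hp' Hq'.
  by move: Hp' Hq'; case: (coef p m); case: (coef q m) => // H1 H2;
    [have := H1 isT | have := H2 isT].
- move=> q Hq; exists (map (liftm i j) (filter (N_mono i j) q)); split.
    move=> m; rewrite /coef => Ho.
    have : has (meq m) (map (liftm i j) (filter (N_mono i j) q)).
      by rewrite has_count odd_gt0.
    case/hasP => e /mapP[f fin ->]; rewrite meq_trim => /eqP E.
    move: fin; rewrite mem_filter => /andP[Nf _].
    by rewrite -M_trim E M_trim lift_M.
  have -> : phi (map (liftm i j) (filter (N_mono i j) q)) = filter (N_mono i j) q.
    by rewrite /phi -map_comp map_id_in.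
  move=> m; rewrite /coef count_filter.
  have Hq' := Hq m; rewrite /coef in Hq'.
  case Nm: (N_mono i j m).
    congr odd; apply: eq_count => e /=.
    case H: (meq m e) => //=.
    by move: H; rewrite meq_trim => /eqP E; rewrite -N_trim -E N_trim.
  have -> : count (predI (meq m) (N_mono i j)) q = 0.
    rewrite (@eq_count _ _ pred0) ?count_pred0 // => e /=.
    case H: (meq m e) => //=.
    by move: H; rewrite meq_trim => /eqP E; rewrite -N_trim -E N_trim.
  by move: Hq'; case: (odd _) => // /(_ isT); rewrite Nm.
Qed.
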